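(* In the setting of the context, let $v\in J^k_o(X)$, choose $h\in\hat J^k(X)$ with $\delta_2(h)=v$, and write $h|_A=i_2(\{\gamma_A\})$, $h|_B=i_2(\{\gamma_B\})$ with $\gamma_A\in\mathbf\Lambda^{k-1}(A)$, $\gamma_B\in\mathbf\Lambda^{k-1}(B)$ (possible since $\delta_2(h|_A)=0=\delta_2(h|_B)$). Then $\gamma_A|_D-\gamma_B|_D\in\mathbf\Lambda^{k-1}_J(D)$, and its class $\Omega(v)$ in $Q_D:=\mathbf\Lambda^{k-1}_J(D)/(\mathbf\Lambda^{k-1}_J(A)|_D+\mathbf\Lambda^{k-1}_J(B)|_D)$ is independent of the choices of $h$ and of the representatives $\gamma_A,\gamma_B$. The resulting map $\Omega:J^k_o(X)\to Q_D$ is a group homomorphism.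
   Context: Let $J^*$ be a $\mathbb{Z}$-graded generalized cohomology theory on smooth manifolds (with corners) such that $J^k(\mathrm{pt})$ is finitely generated for every $k$; write $J^k(M;\mathbb{Z})=J^k(M)$, and $J^k(M;\mathbb{R})$, $J^k(M;\mathbb{R}/\mathbb{Z})$ for the associated theories with real and $\mathbb{R}/\mathbb{Z}$ coefficients. For $F=\mathbb{Q},\mathbb{R}$ set $\mathbf H^k(M;F)=\bigoplus_{j\ge0}H^j(M;J^{k-j}(\mathrm{pt})\otimes F)$, and $\mathbf\Lambda^k(M)=\bigoplus_{j\ge0}\Omega^j(M;J^{k-j}(\mathrm{pt})\otimes\mathbb{R})$ (smooth forms), with exterior derivative $d$. Let $ch:J^k(M;\mathbb{Z})\to\mathbf H^k(M;\mathbb{Q})$ be the canonical (Chern character) map, $i_\mathbb{R}:\mathbf H^k(M;\mathbb{Q})\to\mathbf H^k(M;\mathbb{R})$ the coefficient map, and $\mathbf\Lambda^k_J(M)$ the closed forms in $\mathbf\Lambda^k(M)$ whose de Rham class lies in $i_\mathbb{R}(ch(J^k(M;\mathbb{Z})))$. Let $p:\mathbf H^{k-1}(M;\mathbb{R})\to J^{k-1}(M;\mathbb{R}/\mathbb{Z})$ be induced by $\mathbb{R}\to\mathbb{R}/\mathbb{Z}$ and $b$ the Bockstein. $\hat J^k$ is a differential cohomology functor associated to $J$: a functor from smooth manifolds with corners to abelian groups with natural transformations $i_1:J^{k-1}(\cdot;\mathbb{R}/\mathbb{Z})\to\hat J^k$, $i_2:\mathbf\Lambda^{k-1}/\mathbf\Lambda^{k-1}_J\to\hat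 J^k$, $\delta_1:\hat J^k\to\mathbf\Lambda^k_J$, $\delta_2:\hat J^k\to J^k(\cdot;\mathbb{Z})$ such that $0\to J^{k-1}(\mathbb{R}/\mathbb{Z})\xrightarrow{i_1}\hat J^k\xrightarrow{\delta_1}\mathbf\Lambda^k_J\to0$ and $0\to\mathbf\Lambda^{k-1}/\mathbf\Lambda^{k-1}_J\xrightarrow{i_2}\hat J^k\xrightarrow{\delta_2}J^k(\mathbb{Z})\to0$ are exact, $\delta_2 i_1=b$, $\delta_1 i_2=d$, $i_1\circ p=i_2\circ\mathrm{deRh}$ (deRh sending a real class to the class of a closed representative), and $\mathrm{deRh}\circ\delta_1=i_\mathbb{R}\circ ch\circ\delta_2$ (deRh sending a closed form to its class). Geometric setting: $X$ is a compact smooth manifold, $X=A\cup B$ with $A,B$ compact codimension-$0$ submanifolds, $D=A\cap B$ a codimension-$0$ submanifold with collar neighborhoods in both $A$ and $B$. $J^k_o(X)=\{v\in J^k(X;\mathbb{Z}): v|_A=0=v|_B\}$. For a form $\alpha$, $\{\alpha\}$ denotes its class modulo $\mathbf\Lambda^{k-1}_J$. *)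

(* Defs.v *)
(* Abstract (axiomatized) rendering of the Mayer-Vietoris
   diagram D ⊂ A, B ⊂ X for a differential cohomology functor. *)
From HB Require Import structures.
From mathcomp Require Import all_boot all_order all_algebra.
Set Implicit Arguments. Unset Strict Implicit. Unset Printing Implicit Defensive.
Import GRing.Theory.
Local Open Scope ring_scope.

Definition additive_fun (U V : zmodType) (f : U -> V) : Prop :=
  forall x y, f (x - y) = f x - f y.

Definition subgroup_pred (U : zmodType) (P : U -> Prop) : Prop :=
  P 0 /\ forall x y, P x -> P y -> P (x - y).

(* Restriction of the data of the context to the four manifolds X, A, B, D:
   L_ = Λ^{k-1}(·) (smooth forms), LJ_ = Λ^{k-1}_J(·) ⊂ L_,
   H_ = \hat J^k(·), J_ = J^k(·;Z); r..  = restriction maps,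
   i2_ : Λ^{k-1} -> \hat J^k  (i2 composed with the projection onto Λ/Λ_J),
   d2_ : \hat J^k -> J^k(·;Z). *)
Record MVDiffData := {
  LX : zmodType; LA : zmodType; LB : zmodType; LD : zmodType;
  HX : zmodType; HA : zmodType; HB : zmodType; HD : zmodType;
  JX : zmodType; JA : zmodType; JB : zmodType; JD : zmodType;
  LJX : LX -> Prop; LJA : LA -> Prop; LJB : LB -> Prop; LJD : LD -> Prop;
  rLXA : LX -> LA; rLXB : LX -> LB; rLAD : LA -> LD; rLBD : LB -> LD;
  rHXA : HX -> HA; rHXB : HX -> HB; rHAD : HA -> HD; rHBD : HB -> HD;
  rJXA : JX -> JA; rJXB : JX -> JB; rJAD : JA -> JD; rJBD : JB -> JD;
  i2X : LX -> HX; i2A : LA -> HA; i2B : LB -> HB; i2D : LD -> HD;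
  d2X : HX -> JX; d2A : HA -> JA; d2B : HB -> JB; d2D : HD -> JD;
  add_rLXA : additive_fun rLXA; add_rLXB : additive_fun rLXB;
  add_rLAD : additive_fun rLAD; add_rLBD : additive_fun rLBD;
  add_rHXA : additive_fun rHXA; add_rHXB : additive_fun rHXB;
  add_rHAD : additive_fun rHAD; add_rHBD : additive_fun rHBD;
  add_rJXA : additive_fun rJXA; add_rJXB : additive_fun rJXB;
  add_rJAD : additive_fun rJAD; add_rJBD : additive_fun rJBD;
  add_i2X : additive_fun i2X; add_i2A : additive_fun i2A;
  add_i2B : additive_fun i2B; add_i2D : additive_fun i2D;
  add_d2X : additive_fun d2X; add_d2A : additive_fun d2A;
  add_d2B : additive_fun d2B; add_d2D : additive_fun d2D;
  comp_L : forall a, rLAD (rLXA a) = rLBD (rLXB a);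
  comp_H : forall h, rHAD (rHXA h) = rHBD (rHXB h);
  comp_J : forall v, rJAD (rJXA v) = rJBD (rJXB v);
  (* Λ_J is a subgroup, preserved by restriction (naturality of ch, deRh) *)
  sub_LJX : subgroup_pred LJX; sub_LJA : subgroup_pred LJA;
  sub_LJB : subgroup_pred LJB; sub_LJD : subgroup_pred LJD;
  res_LJXA : forall a, LJX a -> LJA (rLXA a);
  res_LJXB : forall a, LJX a -> LJB (rLXB a);
  res_LJAD : forall a, LJA a -> LJD (rLAD a);
  res_LJBD : forall a, LJB a -> LJD (rLBD a);
  (* i2 is injective on Λ^{k-1}/Λ^{k-1}_J: its kernel on forms is Λ_J *)
  ker_i2X : forall a, i2X a = 0 <-> LJX a;
  ker_i2A : forall a, i2A a = 0 <-> LJA a;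
  ker_i2B : forall a, i2B a = 0 <-> LJB a;
  ker_i2D : forall a, i2D a = 0 <-> LJD a;
  ex_X : forall h, d2X h = 0 <-> exists a, h = i2X a;
  ex_A : forall h, d2A h = 0 <-> exists a, h = i2A a;
  ex_B : forall h, d2B h = 0 <-> exists a, h = i2B a;
  ex_D : forall h, d2D h = 0 <-> exists a, h = i2D a;
  surj_X : forall v, exists h, d2X h = v;
  surj_A : forall v, exists h, d2A h = v;
  surj_B : forall v, exists h, d2B h = v;
  surj_D : forall v, exists h, d2D h = v;
  nat_i2XA : forall a, rHXA (i2X a) = i2A (rLXA a);
  nat_i2XB : forall a, rHXB (i2X a) = i2B (rLXB a);
  nat_i2AD : forall a, rHAD (i2A a) = i2D (rLAD a);
  nat_i2BD : forall a, rHBD (i2B a) = i2D (rLBD a);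
  nat_d2XA : forall h, rJXA (d2X h) = d2A (rHXA h);
  nat_d2XB : forall h, rJXB (d2X h) = d2B (rHXB h);
  nat_d2AD : forall h, rJAD (d2A h) = d2D (rHAD h);
  nat_d2BD : forall h, rJBD (d2B h) = d2D (rHBD h)
}.

Definition Jo (M : MVDiffData) (v : JX M) : Prop :=
  rJXA v = 0 /\ rJXB v = 0.

(* The subgroup Λ_J(A)|_D + Λ_J(B)|_D of Λ^{k-1}(D); Q_D = LJD / W. *)
Definition Wsub (M : MVDiffData) (x : LD M) : Prop :=
  exists a b, LJA a /\ LJB b /\ x = rLAD a + rLBD b.

(* Main.v *)
Require Import Defs.
From HB Require Import structures.
From mathcomp Require Import all_boot all_order all_algebra.
From Stdlib Require Import Classical ClassicalEpsilon.
Import GRing.Theory.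
Local Open Scope ring_scope.

Section H.
Variables (U V : zmodType) (f : U -> V) (Hf : additive_fun f).
Lemma af0 : f 0 = 0.
Proof. by rewrite -(subrr (0:U)) Hf subrr. Qed.
Lemma afN x : f (- x) = - f x.
Proof. by rewrite -sub0r Hf af0 sub0r. Qed.
Lemma afD x y : f (x + y) = f x + f y.
Proof. by have := Hf x (- y); rewrite afN !opprK. Qed.
Lemma afB x y : f (x - y) = f x - f y.
Proof. exact: Hf. Qed.
End H.
Arguments af0 {U V f} Hf.
Arguments afN {U V f} Hf x.
Arguments afD {U V f} Hf x y.
Arguments afB {U V f} Hf x y.

Section S.
Variables (U : zmodType) (P : U -> Prop) (HP : subgroup_pred P).
Lemma sgN x : P x -> P (- x).
Proof. move=> Px; rewrite -sub0r; apply: (proj2 HP) => //; exact: (proj1 HP). Qed.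
Lemma sgD x y : P x -> P y -> P (x + y).
Proof. move=> Px Py; have := proj2 HP x (- y) Px (sgN _ Py); by rewrite opprK. Qed.
End S.
Arguments sgN {U P} HP {x}.
Arguments sgD {U P} HP {x y}.

Lemma h1 (U : zmodType) (x y z w t : U) : x - z - (y - w) = x - y - t - (z - w - t).
Proof. rewrite !opprB [t + _]addrC [RHS]addrA [RHS]addrAC subrK [LHS]addrACA [RHS]addrACA; congr (_ + _); exact: addrC. Qed.
Lemma h2 (U : zmodType) (x y z u O : U) : - (x + y - (z + u) - O) = O - (x - z) - (y - u).
Proof. rewrite opprB -[RHS]addrA -opprD; congr (O - _). by rewrite opprD addrACA. Qed.

Section W.
Variable M : MVDiffData.
Lemma W0 : Wsub (0 : LD M).
Proof.
exists 0, 0; split; first exact: (proj1 (@sub_LJA M)).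
split; first exact: (proj1 (@sub_LJB M)).
by rewrite (af0 (@add_rLAD M)) (af0 (@add_rLBD M)) addr0.
Qed.
Lemma WN x : Wsub x -> Wsub (- x : LD M).
Proof.
case=> a [b [Ha [Hb ->]]]; exists (- a), (- b); split; first exact (sgN (@sub_LJA M) Ha).
split; first exact (sgN (@sub_LJB M) Hb).
by rewrite (afN (@add_rLAD M)) (afN (@add_rLBD M)) opprD.
Qed.
Lemma WD x y : Wsub x -> Wsub y -> Wsub (x + y : LD M).
Proof.
case=> a [b [Ha [Hb ->]]]; case=> a' [b' [Ha' [Hb' ->]]].
exists (a + a'), (b + b'); split; first exact (sgD (@sub_LJA M) Ha Ha').
split; first exact (sgD (@sub_LJB M) Hb Hb').
rewrite (afD (@add_rLAD M)) (afD (@add_rLBD M)).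
by rewrite -!addrA; congr (_ + _); rewrite addrC -!addrA; congr (_ + _); rewrite addrC.
Qed.

Lemma uniqW (h h' : HX M) gA gA' gB gB' :
  d2X h = d2X h' -> rHXA h = i2A gA -> rHXB h = i2B gB ->
  rHXA h' = i2A gA' -> rHXB h' = i2B gB' ->
  Wsub ((rLAD gA - rLBD gB) - (rLAD gA' - rLBD gB')).
Proof.
move=> Ed HA HB HA' HB'.
have : d2X (h - h') = 0 by rewrite (@add_d2X M) Ed subrr.
case/(@ex_X M) => a Ea.
have eA : i2A (gA - gA' - rLXA a) = 0.
  by rewrite !(@add_i2A M) -(@nat_i2XA M) -Ea (@add_rHXA M) HA HA' subrr.
have eB : i2B (gB - gB' - rLXB a) = 0.
  by rewrite !(@add_i2B M) -(@nat_i2XB M) -Ea (@add_rHXB M) HB HB' subrr.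
move/(@ker_i2A M): eA => LA1; move/(@ker_i2B M): eB => LB1.
exists (gA - gA' - rLXA a), (- (gB - gB' - rLXB a)); split => //.
split; first exact (sgN (@sub_LJB M) LB1).
rewrite (afN (@add_rLBD M)) !(@add_rLAD M) !(@add_rLBD M) (@comp_L M).
exact: h1.
Qed.

Lemma closedD (h : HX M) gA gB :
  rHXA h = i2A gA -> rHXB h = i2B gB -> LJD (rLAD gA - rLBD gB).
Proof.
move=> HA HB; apply/(@ker_i2D M).
by rewrite (@add_i2D M) -(@nat_i2AD M) -(@nat_i2BD M) -HA -HB (@comp_H M) subrr.
Qed.

Lemma existsRep (v : JX M) : Jo v ->
  exists h gA gB, d2X h = v /\ rHXA h = i2A gA /\ rHXB h = i2B gB.
Proof.
case=> vA vB; case: (@surj_X M v) => h Eh.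
have : d2A (rHXA h) = 0 by rewrite -(@nat_d2XA M) Eh.
case/(@ex_A M) => gA EA.
have : d2B (rHXB h) = 0 by rewrite -(@nat_d2XB M) Eh.
case/(@ex_B M) => gB EB.
by exists h, gA, gB.
Qed.
End W.
Arguments uniqW {M h h' gA gA' gB gB'}.
Arguments closedD {M h gA gB}.
Arguments existsRep {M v}.
Arguments WN {M x}.

Theorem mainTheorem2 (M : MVDiffData) :
  exists Om : JX M -> LD M,
    (forall v, Jo v -> LJD (Om v)) /\
    (forall v (h : HX M) (gA : LA M) (gB : LB M),
        Jo v -> d2X h = v -> rHXA h = i2A gA -> rHXB h = i2B gB ->
        LJD (rLAD gA - rLBD gB) /\ Wsub (rLAD gA - rLBD gB - Om v)) /\
    (forall v w, Jo v -> Jo w -> Wsub (Om (v + w) - Om v - Om w)).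
Proof.
have Hc : forall v : JX M, exists x : LD M, Jo v -> exists h gA gB,
   d2X h = v /\ rHXA h = i2A gA /\ rHXB h = i2B gB /\ x = rLAD gA - rLBD gB.
  move=> v; case: (classic (Jo v)) => Jv; last by exists 0.
  case: (existsRep Jv) => h [gA [gB [E1 [E2 E3]]]].
  by exists (rLAD gA - rLBD gB) => _; exists h, gA, gB.
have [Om HOm] : exists Om : JX M -> LD M, forall v, Jo v -> exists h gA gB,
   d2X h = v /\ rHXA h = i2A gA /\ rHXB h = i2B gB /\ Om v = rLAD gA - rLBD gB.
  exists (fun v => proj1_sig (constructive_indefinite_description _ (Hc v))).
  move=> v; exact: (proj2_sig (constructive_indefinite_description _ (Hc v))).
have P2 : forall v (h : HX M) (gA : LA M) (gB : LB M),
    Jo v -> d2X h = v -> rHXA h = i2A gA -> rHXB h = i2B gB ->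
    LJD (rLAD gA - rLBD gB) /\ Wsub (rLAD gA - rLBD gB - Om v).
  move=> v h gA gB Jv E1 E2 E3; split; first exact: closedD E2 E3.
  case: (HOm v Jv) => h' [gA' [gB' [E1' [E2' [E3' ->]]]]].
  apply: uniqW E2 E3 E2' E3'; by rewrite E1 E1'.
exists Om; split.
  move=> v Jv; case: (HOm v Jv) => h [gA [gB [_ [E2 [E3 ->]]]]]; exact: closedD E2 E3.
split => // v w Jv Jw.
case: (HOm v Jv) => h [gA [gB [E1 [E2 [E3 Ev]]]]].
case: (HOm w Jw) => h' [gA' [gB' [E1' [E2' [E3' Ew]]]]].
have Jvw : Jo (v + w).
  by case: Jv Jw => a b [c d]; split; rewrite ?(afD (@add_rJXA M)) ?(afD (@add_rJXB M)) ?a ?b ?c ?d addr0.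
have := P2 (v + w) (h + h') (gA + gA') (gB + gB') Jvw.
rewrite (afD (@add_d2X M)) E1 E1' (afD (@add_rHXA M)) (afD (@add_rHXB M)) E2 E3 E2' E3'.
rewrite -(afD (@add_i2A M)) -(afD (@add_i2B M)).
case/(_ erefl erefl erefl) => _ /WN.
rewrite Ev Ew (afD (@add_rLAD M)) (afD (@add_rLBD M)).
set O := Om (v + w).
by rewrite h2.
Qed.
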